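(* Let $D_\sigma>0$, $k_\mathrm{d}\ge0$, $r_{\mathrm{R}}>0$, $r_{\mathrm{T}}>0$, $r_0>r_{\mathrm{T}}+r_{\mathrm{R}}$ and $w_\mathrm{e}>0$. For $r>r_{\mathrm{R}}$ let $$h_\mathrm{p}(t,r)=\frac{r_{\mathrm{R}}w_\mathrm{e}}{r}\left[\frac{1}{\sqrt{\pi D_\sigma t}}\exp\Big(-\frac{(r-r_{\mathrm{R}})^2}{4D_\sigma t}-k_\mathrm{d}t\Big)-\gamma(w_\mathrm{e})\exp\big(\gamma(w_\mathrm{e})(r-r_{\mathrm{R}})+\zeta(w_\mathrm{e})t\big)\mathrm{erfc}\Big(\frac{r-r_{\mathrm{R}}}{\sqrt{4D_\sigma t}}+\gamma(w_\mathrm{e})\sqrt{D_\sigma t}\Big)\right],$$ and define $$h_\mathrm{s}(t)=\frac{1}{2r_{\mathrm{T}}}\int_{-r_{\mathrm{T}}}^{r_{\mathrm{T}}}h_\mathrm{p}\Big(t,\sqrt{r_{\mathrm{T}}^2+r_0^2-2r_0x}\Big)\,\mathrm{d}x.$$ Then $$h_\mathrm{s}(t)=\frac{r_{\mathrm{R}}w_\mathrm{e}}{2r_{\mathrm{T}}r_0}\big[\xi_1(t,r_0-r_{\mathrm{T}}-r_{\mathrm{R}})-\xi_1(t,r_0+r_{\mathrm{T}}-r_{\mathrm{R}})\big],$$ where $\xi_1(t,z)=\exp\big(\gamma(w_\mathrm{e})z+\zeta(w_\mathrm{e})t\big)\,\mathrm{erfc}\Big(\varpi(w_\mathrm{e})\sqrt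 t+\frac{z}{\sqrt{4D_\sigma t}}\Big)$.
   Context: Notation: $\gamma(w)=\frac{wr_{\mathrm{R}}+D_\sigma}{D_\sigma r_{\mathrm{R}}}$, $\zeta(w)=\gamma(w)^2D_\sigma-k_\mathrm{d}$, $\varpi(w)=\gamma(w)\sqrt{D_\sigma}$. $h_\mathrm{p}(t,r)$ is the expected hitting rate at the (homogenized) receiver of radius $r_{\mathrm{R}}$ with effective reaction rate $w_\mathrm{e}$ for a point release at distance $r$ from its center; $h_\mathrm{s}(t)$ is the hitting rate when molecules are released uniformly at time 0 from a sphere of radius $r_{\mathrm{T}}$ whose center lies at distance $r_0$ from the receiver center. *)

(* Defs.v *)
From Stdlib Require Import Reals.
From Coquelicot Require Import Coquelicot.
Open Scope R_scope.

Definition erf (x : R) : R := 2 / sqrt PI * RInt (fun u => exp (- u ^ 2)) 0 x.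
Definition erfc (x : R) : R := 1 - erf x.

Definition gam (Ds rR w : R) : R := (w * rR + Ds) / (Ds * rR).
Definition zeta (Ds kd rR w : R) : R := (gam Ds rR w) ^ 2 * Ds - kd.
Definition varpi (Ds rR w : R) : R := gam Ds rR w * sqrt Ds.

Definition h_p (Ds kd rR we t r : R) : R :=
  rR * we / r *
  (1 / sqrt (PI * Ds * t) * exp (- (r - rR) ^ 2 / (4 * Ds * t) - kd * t)
   - gam Ds rR we * exp (gam Ds rR we * (r - rR) + zeta Ds kd rR we * t)
     * erfc ((r - rR) / sqrt (4 * Ds * t) + gam Ds rR we * sqrt (Ds * t))).

(* hitting rate for uniform release from a sphere of radius rT at distance r0 *)
Definition h_s (Ds kd rR rT r0 we t : R) : R :=
  1 / (2 * rT) *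
  RInt (fun x => h_p Ds kd rR we t (sqrt (rT ^ 2 + r0 ^ 2 - 2 * r0 * x))) (- rT) rT.

Definition xi1 (Ds kd rR we t z : R) : R :=
  exp (gam Ds rR we * z + zeta Ds kd rR we * t)
  * erfc (varpi Ds rR we * sqrt t + z / sqrt (4 * Ds * t)).

(* Main.v *)
Require Import Defs.
From Stdlib Require Import Reals Lra.
From Coquelicot Require Import Coquelicot.
Open Scope R_scope.

Lemma erfc_der x : is_derive erfc x (- (2 / sqrt PI * exp (- x ^ 2))).
Proof.
  assert (H : is_derive (fun b => RInt (fun u => exp (- u ^ 2)) 0 b) x (exp (- x ^ 2))).
  { apply (is_derive_RInt (fun u => exp (- u ^ 2)) _ 0).
    - exists (mkposreal 1 Rlt_0_1). intros y _.
      apply (RInt_correct (V:=R_CompleteNormedModule)). apply ex_RInt_continuous => z _.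
      apply (ex_derive_continuous (K:=R_AbsRing) (V:=R_NormedModule)). auto_derive. auto.
    - apply (ex_derive_continuous (K:=R_AbsRing) (V:=R_NormedModule)). auto_derive. auto. }
  pose proof (is_derive_scal _ _ (2 / sqrt PI) _ H) as H2.
  pose proof (is_derive_minus (fun _ => 1) _ x 0 _ (is_derive_const 1 x) H2) as H3.
  unfold erfc, erf.
  replace (- (2 / sqrt PI * exp (- x ^ 2))) with (minus 0 (2 / sqrt PI * (exp (- x ^ 2)))).
  exact H3.
  unfold minus, plus, opp, scal; simpl. unfold mult; simpl. ring.
Qed.
Lemma key (g c q k rR r0 a x : R) : 0 < q -> c = g^2 * q^2 - k -> 0 < a - 2 * r0 * x ->
  is_derive (fun x => exp (g * (sqrt (a - 2*r0*x) - rR) + c) * erfc (g * q + (sqrt (a - 2*r0*x) - rR) / (2*q))) x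
   (r0 / sqrt (a - 2*r0*x) * (1 / (sqrt PI * q) * exp (- (sqrt (a - 2*r0*x) - rR)^2 / (4 * q^2) - k)
     - g * exp (g * (sqrt (a - 2*r0*x) - rR) + c) * erfc ((sqrt (a - 2*r0*x) - rR) / (2*q) + g * q))).
Proof.
  intros Hq Hc Ha.
  assert (Hr : 0 < sqrt (a - 2*r0*x)) by (apply sqrt_lt_R0; auto).
  assert (Hpi : 0 < sqrt PI) by (apply sqrt_lt_R0; apply PI_RGT_0).
  set (r := sqrt (a - 2*r0*x)) in *.
  assert (HE : exp (g * (r - rR) + c) * exp (- (g * q + (r - rR) / (2*q))^2)
     = exp (- (r - rR)^2 / (4 * q^2) - k)).
  { rewrite <- exp_plus. f_equal. subst c. field. lra. }
  auto_derive.
  - repeat split; auto. eexists; apply erfc_der.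
  - replace (Derive _ _) with (- (2 / sqrt PI * exp (- (g * q + (r - rR) / (2*q))^2))).
    2: { symmetry. apply is_derive_unique. apply erfc_der. }
    change (sqrt (a + - (2 * r0 * x))) with r. rewrite <- HE.
    rewrite (Rplus_comm ((r - rR) / (2*q)) (g*q)).
    set (E := erfc _). set (X := exp (- _ ^ 2)). set (A := exp _).
    field. lra.
Qed.

Theorem lemma2 (Ds kd rR rT r0 we t : R) :
  0 < Ds -> 0 <= kd -> 0 < rR -> 0 < rT -> rT + rR < r0 -> 0 < we -> 0 < t ->
  h_s Ds kd rR rT r0 we t =
  rR * we / (2 * rT * r0) *
  (xi1 Ds kd rR we t (r0 - rT - rR) - xi1 Ds kd rR we t (r0 + rT - rR)).
Proof.
  intros HD Hkd HrR HrT Hr0 Hwe Ht.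
  set (g := gam Ds rR we). set (q := sqrt (Ds * t)). set (k := kd * t).
  set (c := zeta Ds kd rR we * t). set (a := rT ^ 2 + r0 ^ 2).
  assert (Hq : 0 < q) by (apply sqrt_lt_R0; nra).
  assert (Hq2 : q ^ 2 = Ds * t) by (apply pow2_sqrt; nra).
  assert (Hc : c = g^2 * q^2 - k) by (unfold c, zeta, k; fold g; rewrite Hq2; ring).
  assert (Hpi : 0 < sqrt PI) by (apply sqrt_lt_R0; apply PI_RGT_0).
  assert (Hs4 : sqrt (4 * Ds * t) = 2 * q).
  { unfold q. replace (4 * Ds * t) with ((2*2) * (Ds * t)) by ring.
    rewrite sqrt_mult by nra. rewrite sqrt_square by lra. reflexivity. }
  assert (Hspi : sqrt (PI * Ds * t) = sqrt PI * q).
  { unfold q. rewrite Rmult_assoc. apply sqrt_mult. left; apply PI_RGT_0. nra. }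
  set (F := fun x => exp (g * (sqrt (a - 2*r0*x) - rR) + c) * erfc (g * q + (sqrt (a - 2*r0*x) - rR) / (2*q))).
  set (df := fun x => r0 / sqrt (a - 2*r0*x) * (1 / (sqrt PI * q) * exp (- (sqrt (a - 2*r0*x) - rR)^2 / (4 * q^2) - k)
     - g * exp (g * (sqrt (a - 2*r0*x) - rR) + c) * erfc ((sqrt (a - 2*r0*x) - rR) / (2*q) + g * q))).
  assert (Hpos : forall x, Rmin (-rT) rT <= x <= Rmax (-rT) rT -> 0 < a - 2 * r0 * x).
  { intros x Hx. rewrite Rmin_left in Hx by lra. rewrite Rmax_right in Hx by lra.
    unfold a. nra. }
  assert (HI : is_RInt df (-rT) rT (minus (F rT) (F (-rT)))).
  { apply (is_RInt_derive (V:=R_CompleteNormedModule)).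
    - intros x Hx. apply key; auto.
    - intros x Hx. specialize (Hpos x Hx).
      assert (0 < sqrt (a - 2*r0*x)) by (apply sqrt_lt_R0; auto).
      apply (ex_derive_continuous (K:=R_AbsRing) (V:=R_NormedModule)). unfold df.
      auto_derive. repeat split; try (unfold Rminus in *; lra); try (eexists; apply erfc_der).
      }
  unfold h_s.
  rewrite (RInt_ext _ (fun x => rR * we / r0 * df x)).
  2: { intros x Hx. assert (Hx' : Rmin (-rT) rT <= x <= Rmax (-rT) rT) by lra.
       specialize (Hpos x Hx').
       assert (0 < sqrt (a - 2*r0*x)) by (apply sqrt_lt_R0; auto).
       unfold h_p, df. fold g. fold c. fold k. rewrite Hs4, Hspi. replace (4*Ds*t) with (4*q^2) by (rewrite Hq2; ring).
       replace (rT ^ 2 + r0 ^ 2) with a by reflexivity.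
       fold q. match goal with |- ?A = ?B => change (@eq R A B) end. field. repeat split; lra. }
  pose proof (is_RInt_scal _ _ _ (rR*we/r0) _ HI) as HI2.
  replace (RInt _ (-rT) rT) with (scal (rR*we/r0) (minus (F rT) (F (-rT)))) by (symmetry; apply is_RInt_unique; exact HI2).
  unfold scal, minus, plus, opp, F; simpl; unfold mult; simpl.
  replace (a - 2 * r0 * rT) with ((r0 - rT)^2) by (unfold a; ring).
  replace (a - 2 * r0 * - rT) with ((r0 + rT)^2) by (unfold a; ring).
  rewrite !sqrt_pow2 by lra.
  unfold xi1, varpi. fold g c. rewrite Hs4.
  replace (g * sqrt Ds * sqrt t) with (g * q) by (unfold q; rewrite sqrt_mult by lra; ring).
  field. lra.
Qed.
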